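(* Let $\mathcal{H}$ be a finite-dimensional Hilbert space and $\rho_1,\rho_2\in\mathcal{D}^\le(\mathcal{H})$. The following are equivalent: (1) $\rho_1=\rho_2$; (2) there exists an orthonormal basis $\mathcal{B}$ of $\mathcal{H}$ such that $\rho_1\,(=_\mathcal{B})^\#\,\rho_2$; (3) $\rho_1\,(=_{\mathit{sym}})^\#\,\rho_2$.
   Context: $\mathcal{D}^\le(\mathcal{H})$ is the set of partial density operators (positive, trace $\le 1$). For $\rho\in\mathcal{D}^\le(\mathcal{H}_1\otimes\mathcal{H}_2)$, $\rho$ is a coupling for $\langle\rho_1,\rho_2\rangle$ if $\mathrm{tr}_2(\rho)=\rho_1$ and $\mathrm{tr}_1(\rho)=\rho_2$ (partial traces over the second, resp. first, factor). The support $\mathrm{supp}(\rho)$ is the span of eigenvectors of $\rho$ with nonzero eigenvalues. For a closed subspace $\mathcal{X}$ of $\mathcal{H}_1\otimes\mathcal{H}_2$, we write $\rho_1\,\mathcal{X}^\#\,\rho_2$ (a lifting) if there exists a witness $\rho\in\mathcal{D}^\le(\mathcal{H}_1\otimes\mathcal{H}_2)$, i.e. a coupling $\rho$ for $\langle\rho_1,\rho_2\rangle$ with $\mathrm{supp}(\rho)\subseteq\mathcal{X}$. For an orthonormal basis $\mathcal{B}=\{|i\rangle\}$ of $\mathcal{H}$, $(=_\mathcal{B})$ is the subspace $\mathrm{span}\{|i\rangle|i\rangle\}$ of $\mathcal{H}\otimes\mathcal{H}$. $(=_{\mathit{sym}})$ is the symmetric subspace of $\mathcal{H}\otimes\mathcal{H}$,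 i.e. the range of the projection $\frac12(I\otimes I+S)$, where $S$ is the swap operator $S|\varphi,\psi\rangle=|\psi,\varphi\rangle$. *)

(* Defs.v *)
(* H = C^n (column vectors 'cV[C]_n) over a numClosedFieldType C
   (e.g. complex numbers); H (x) H = C^(n*n), the basis vector |i>|j> being
   indexed by mxvec_index i j (first factor i, second factor j). *)
From HB Require Import structures.
From mathcomp Require Import all_boot all_order all_algebra.
Set Implicit Arguments. Unset Strict Implicit. Unset Printing Implicit Defensive.
Import Order.TTheory GRing.Theory Num.Theory.
Local Open Scope ring_scope.

Section QDefs.
Variable C : numClosedFieldType.

Definition inner n (u v : 'cV[C]_n) : C := \sum_k (u k 0)^* * v k 0.

Definition psd n (A : 'M[C]_n) : Prop := forall x : 'cV[C]_n, 0 <= inner x (A *m x).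

Definition pdo n (A : 'M[C]_n) : Prop := psd A /\ \tr A <= 1.

Definition ptr2 m n (r : 'M[C]_(m * n)) : 'M[C]_m :=
  \matrix_(i, k) \sum_(j < n) r (mxvec_index i j) (mxvec_index k j).
Definition ptr1 m n (r : 'M[C]_(m * n)) : 'M[C]_n :=
  \matrix_(j, l) \sum_(i < m) r (mxvec_index i j) (mxvec_index i l).

Definition coupling m n (r : 'M[C]_(m * n)) (r1 : 'M[C]_m) (r2 : 'M[C]_n) : Prop :=
  ptr2 r = r1 /\ ptr1 r = r2.

(* subspaces of C^N are represented (mxalgebra style) by matrices whose row
   space is the subspace; a column vector v lies in X iff (v^T <= X)%MS. *)
Definition supp_sub N k (r : 'M[C]_N) (X : 'M[C]_(k, N)) : Prop :=
  forall (v : 'cV[C]_N) (lam : C), lam != 0 -> r *m v = lam *: v -> (v^T <= X)%MS.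

Definition lifting m n k (r1 : 'M[C]_m) (X : 'M[C]_(k, m * n)) (r2 : 'M[C]_n) : Prop :=
  exists r : 'M[C]_(m * n), pdo r /\ coupling r r1 r2 /\ supp_sub r X.

Definition ket2 m n (u : 'cV[C]_m) (v : 'cV[C]_n) : 'rV[C]_(m * n) := mxvec (u *m v^T).

Definition onb n (b : 'I_n -> 'cV[C]_n) : Prop :=
  forall i j, inner (b i) (b j) = (i == j)%:R.

Definition eqB n (b : 'I_n -> 'cV[C]_n) : 'M[C]_(n, n * n) :=
  \matrix_(i < n) ket2 (b i) (b i).

(* swap operator S|x,y> = |y,x>  (acting on row vectors: mxvec A |-> mxvec A^T) *)
Definition swap n : 'M[C]_(n * n) := lin_mx (@trmx C n n).

(* (=_sym) = range of (I + S)/2 *)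
Definition eqsym n : 'M[C]_(n * n) := 2^-1 *: (1%:M + swap n).
End QDefs.

(* Main.v *)
Require Import Defs.
From HB Require Import structures.
From mathcomp Require Import all_boot all_order all_algebra ring.
Set Implicit Arguments. Unset Strict Implicit. Unset Printing Implicit Defensive.
Import Order.TTheory GRing.Theory Num.Theory Num.Def.
Local Open Scope ring_scope.

Section H.
Variable C : numClosedFieldType.

Lemma sum_mxvec m n (F : 'I_(m * n) -> C) :
  \sum_(x < m * n) F x = \sum_(i < m) \sum_(j < n) F (mxvec_index i j).
Proof.
rewrite pair_big (reindex (uncurry (@mxvec_index m n))) /=.
  by apply: eq_bigr => -[i j].
by move: (curry_mxvec_bij m n) => [g h1 h2]; exists g => x _; [apply: h1|apply: h2].
Qed.

Lemma innerDl n (u v w : 'cV[C]_n) : inner (u + v) w = inner u w + inner v w.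
Proof. by rewrite /inner -big_split; apply: eq_bigr => k _; rewrite !mxE rmorphD mulrDl. Qed.
Lemma innerDr n (u v w : 'cV[C]_n) : inner w (u + v) = inner w u + inner w v.
Proof. by rewrite /inner -big_split; apply: eq_bigr => k _; rewrite !mxE mulrDr. Qed.
Lemma innerZl n c (u w : 'cV[C]_n) : inner (c *: u) w = c^* * inner u w.
Proof. by rewrite /inner mulr_sumr; apply: eq_bigr => k _; rewrite !mxE rmorphM mulrA. Qed.
Lemma innerZr n c (u w : 'cV[C]_n) : inner w (c *: u) = c * inner w u.
Proof. by rewrite /inner mulr_sumr; apply: eq_bigr => k _; rewrite !mxE mulrCA. Qed.
Lemma inner_delta n (A : 'M[C]_n) i j : inner (delta_mx i 0) (A *m delta_mx j 0) = A i j.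
Proof.
rewrite -colE /inner (bigD1 i) //= big1 ?addr0.
  by rewrite !mxE !eqxx /= rmorph1 mul1r.
by move=> k /negbTE kn; rewrite !mxE kn /= rmorph0 mul0r.
Qed.

Lemma herm_alg (a b : C) : a^* + b^* = a + b ->
  - 'i * a^* + 'i * b^* = 'i * a - 'i * b -> b^* = a.
Proof.
move=> F1 F2.
have ii : 'i * 'i = -1 :> C by rewrite -expr2 sqrCi.
have G1 : (a^* + b^*) + (- 'i) * (- 'i * a^* + 'i * b^*) = 2 * b^* + (1 + 'i * 'i) * (a^* - b^*) by ring.
have G2 : (a + b) + (- 'i) * ('i * a - 'i * b) = 2 * a + (1 + 'i * 'i) * (b - a) by ring.
rewrite F1 F2 G2 ii subrr !mul0r !addr0 in G1.
apply: (mulfI (_ : (2:C) != 0)); first by rewrite pnatr_eq0.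
by rewrite G1.
Qed.

Lemma psd_herm n (A : 'M[C]_n) : psd A -> forall i j, (A j i)^* = A i j.
Proof.
move=> hA.
have R x : (inner x (A *m x))^* = inner x (A *m x) by apply/conj_Creal/ger0_real.
have P2 x y : inner (x + y) (A *m (x + y)) =
  inner x (A *m x) + inner y (A *m y) + inner x (A *m y) + inner y (A *m x).
  rewrite mulmxDr !innerDl !innerDr. ring.
move=> i j; set ei := delta_mx i 0 : 'cV[C]_n; set ej := delta_mx j 0 : 'cV[C]_n.
have Ri := R ei; have Rj := R ej; rewrite !inner_delta in Ri Rj.
have H1 := R (ei + ej); rewrite P2 !inner_delta in H1.
have H2 := R (ei + 'i *: ej); rewrite P2 -!scalemxAr !innerZl !innerZr !inner_delta in H2.
set a := A i j in H1 H2 *; set b := A j i in H1 H2 *.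
have E1 : (A i i)^* + (A j j)^* + a^* + b^* = A i i + A j j + a + b.
  by rewrite -H1 !rmorphD.
have E2 : (A i i)^* + 'i^*^* * ('i^* * (A j j)^*) + 'i^* * a^* + 'i^*^* * b^*
   = A i i + 'i^* * ('i * A j j) + 'i * a + 'i^* * b.
  by rewrite -H2 !rmorphD !rmorphM.
rewrite Ri Rj in E1; rewrite Ri Rj conjCK conjCi in E2.
have ii : 'i * 'i = -1 :> C by rewrite -expr2 sqrCi.
have F1 : a^* + b^* = a + b.
  by apply: (addrI (A i i + A j j)); rewrite !addrA E1.
have F2 : - 'i * a^* + 'i * b^* = 'i * a - 'i * b.
  have -> : - 'i * a^* + 'i * b^* = (A i i + 'i * (- 'i * A j j) + - 'i * a^* + 'i * b^*) - (A i i + 'i * (- 'i * A j j)) by ring.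
  rewrite E2; ring.
exact: herm_alg F1 F2.
Qed.


Lemma psd_spectral n (A : 'M[C]_n) : psd A -> exists Q : 'M[C]_n, exists d : 'rV[C]_n,
  [/\ forall x y, A x y = \sum_k Q x k * d 0 k * (Q y k)^*,
      forall i j, \sum_x (Q x i)^* * Q x j = (i == j)%:R
    & forall k, A *m col k Q = d 0 k *: col k Q].
Proof.
move=> hA.
have AH : map_mx conjC A^T = A by apply/matrixP => i j; rewrite !mxE psd_herm.
have /orthomx_spectralP E : A \is normalmx by apply/normalmxP; rewrite AH.
set P := spectralmx A in E; set d := spectral_diag A in E.
have uP : P \is unitarymx by apply: spectral_unitarymx.
have uP' : P \in unitmx by apply: unitarymx_unit.
have QE : invmx P = map_mx conjC P^T by apply: invmx_unitary.
exists (invmx P), d; split.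
- move=> x y; rewrite {1}E !mxE; apply: eq_bigr => k _.
  by rewrite mul_mx_diag !mxE QE !mxE conjCK.
- move=> i j; have := unitarymxP uP => /matrixP /(_ i j).
  rewrite !mxE => <-; apply: eq_bigr => x _.
  by rewrite QE !mxE conjCK.
- move=> k; rewrite colE mulmxA -colE {1}E mulmxK //.
  by rewrite -colE mul_mx_diag; apply/colP => x; rewrite !mxE mulrC.
Qed.

Lemma swapE n (v : 'rV[C]_(n * n)) a b :
  (v *m swap C n) 0 (mxvec_index a b) = v 0 (mxvec_index b a).
Proof. by rewrite -[v]vec_mxK mul_vec_lin !mxvecE !mxE. Qed.

Lemma swapK n (v : 'rV[C]_(n * n)) : v *m swap C n *m swap C n = v.
Proof.
apply/rowP => x; case/mxvec_indexP: x => a b.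
by rewrite !swapE.
Qed.

Lemma sym_vec n (v : 'cV[C]_(n * n)) : (v^T <= eqsym C n)%MS ->
  forall a b, v (mxvec_index a b) 0 = v (mxvec_index b a) 0.
Proof.
move=> /submxP [u hu] a b.
have hS : v^T *m swap C n = v^T.
  rewrite hu /eqsym -!scalemxAr -scalemxAl mulmxDr mulmxDl !mulmx1 swapK.
  by rewrite addrC.


have := swapE (v^T) a b; rewrite hS !mxE => ->.
by [].
Qed.

Lemma sym_ptr n (r : 'M[C]_(n * n)) : psd r -> supp_sub r (eqsym C n) -> ptr2 r = ptr1 r.
Proof.
move=> hr hs; have [Q [d [rE _ rQ]]] := psd_spectral hr.
have K k a b : d 0 k != 0 -> Q (mxvec_index a b) k = Q (mxvec_index b a) k.
  move=> dk; have := sym_vec (hs _ _ dk (rQ k)) a b.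
  by rewrite !mxE.
have S a b c e : r (mxvec_index a b) (mxvec_index c e) = r (mxvec_index b a) (mxvec_index e c).
  rewrite !rE; apply: eq_bigr => k _.
  have [->|dk] := eqVneq (d 0 k) 0; first by rewrite !mulr0 !mul0r.
  by rewrite (K k a b) // (K k c e).
by apply/matrixP => a c; rewrite !mxE; apply: eq_bigr => j _; rewrite S.
Qed.

Lemma ket2E m n (u : 'cV[C]_m) (v : 'cV[C]_n) a c :
  ket2 u v 0 (mxvec_index a c) = u a 0 * v c 0.
Proof. by rewrite /ket2 mxvecE !mxE big_ord1 !mxE. Qed.

Lemma eqB_sym n (b : 'I_n -> 'cV[C]_n) : (eqB b <= eqsym C n)%MS.
Proof.
have hS : eqB b *m swap C n = eqB b.
  apply/row_matrixP => k; rewrite row_mul rowK.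
  apply/rowP => x; case/mxvec_indexP: x => a c.
  by rewrite swapE !ket2E mulrC.
have -> : eqB b = eqB b *m eqsym C n.
  rewrite /eqsym -scalemxAr mulmxDr mulmx1 hS scalerDr -scalerDl.
  have -> : (2^-1 + 2^-1 : C) = 1.
    by field.
  by rewrite scale1r.
exact: submxMl.
Qed.

Lemma cjM (a b : C) : (a * b)^* = a^* * b^*. Proof. exact: rmorphM. Qed.
Lemma cj_sum (I : finType) (F : I -> C) : (\sum_i F i)^* = \sum_i (F i)^*.
Proof. exact: rmorph_sum. Qed.

Definition cmx m n (M : 'M[C]_(m, n)) := \matrix_(i, j) (M i j)^*.

Lemma inner_mx n (u v : 'cV[C]_n) : inner u v = ((cmx u^T) *m v) 0 0.
Proof. by rewrite /inner !mxE; apply: eq_bigr => k _; rewrite !mxE. Qed.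

Lemma psd_form N n (M : 'M[C]_(n, N)) (d : 'rV[C]_n) : (forall k, 0 <= d 0 k) ->
  psd (M^T *m diag_mx d *m cmx M).
Proof.
move=> hd x; rewrite inner_mx !mulmxA.
set y := cmx M *m x.
have -> : cmx x^T *m M^T = cmx y^T.
  apply/rowP => k; rewrite /cmx !mxE cj_sum; apply: eq_bigr => z _.
  by rewrite !mxE cjM conjCK mulrC.
rewrite -mulmxA -/y mul_mx_diag mxE; apply: sumr_ge0 => k _; rewrite !mxE.
rewrite mulrAC mulrC; apply: mulr_ge0 => //; rewrite mulrC; exact: mul_conjC_ge0.
Qed.

Lemma tr_ptr2 m n (R : 'M[C]_(m * n)) : \tr (ptr2 R) = \tr R.
Proof.
rewrite /mxtrace sum_mxvec; apply: eq_bigr => i _; rewrite mxE.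
by [].
Qed.

Lemma diag_lifting n (r : 'M[C]_n) : pdo r ->
  exists b : 'I_n -> 'cV[C]_n, onb b /\ lifting r (eqB b) r.
Proof.
move=> [hr htr]; have [Q [d [rE orth rQ]]] := psd_spectral hr.
pose b k := col k Q.
have hb : onb b.
  by move=> i j; rewrite /inner -orth; apply: eq_bigr => x _; rewrite !mxE.
have dge0 k : 0 <= d 0 k.
  have := hr (col k Q); rewrite rQ innerZr.
  have -> : inner (col k Q) (col k Q) = 1.
    have h := orth k k; rewrite eqxx /= in h; rewrite /inner (eq_bigr (fun x => (Q x k)^* * Q x k)) ?h // => x _; rewrite !mxE.
    by [].
  by rewrite mulr1.
set W := eqB b.
have WE k a c : W k (mxvec_index a c) = Q a k * Q c k.
  by rewrite /W /eqB mxE ket2E !mxE.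
pose R := W^T *m diag_mx d *m cmx W.
have RE x y : R x y = \sum_k W k x * d 0 k * (W k y)^*.
  by rewrite /R !mxE; apply: eq_bigr => k _; rewrite mul_mx_diag !mxE.
have n1 k : \sum_j (Q j k)^* * Q j k = 1 by rewrite orth eqxx.
have p2 : ptr2 R = r.
  apply/matrixP => a c; rewrite mxE rE; under eq_bigr => j _ do rewrite RE.
  rewrite exchange_big; apply: eq_bigr => k _.
  rewrite -[RHS]mulr1 -(n1 k) mulr_sumr; apply: eq_bigr => j _.
  by rewrite !WE cjM; ring.
have p1 : ptr1 R = r.
  apply/matrixP => a c; rewrite mxE rE; under eq_bigr => j _ do rewrite RE.
  rewrite exchange_big; apply: eq_bigr => k _.
  rewrite -[RHS]mulr1 -(n1 k) mulr_sumr; apply: eq_bigr => j _.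
  by rewrite !WE cjM; ring.
exists b; split => //; exists R; split; [split|split] => //.
- by apply: psd_form.
- by rewrite -tr_ptr2 p2.
move=> v lam lam0 hv.
have -> : v = lam^-1 *: (R *m v) by rewrite hv scalerA mulVf // scale1r.
have -> : (lam^-1 *: (R *m v))^T = lam^-1 *: (R *m v)^T.
  by apply/matrixP => i j; rewrite !mxE.
apply: scalemx_sub; rewrite trmx_mul /R !trmx_mul trmxK !mulmxA.
exact: submxMl.
Qed.
End H.

Theorem proposition3p8 (C : numClosedFieldType) (n : nat) (r1 r2 : 'M[C]_n) :
  pdo r1 -> pdo r2 ->
  [<-> r1 = r2;
       exists b : 'I_n -> 'cV[C]_n, onb b /\ lifting r1 (eqB b) r2;
       lifting r1 (eqsym C n) r2].
Proof.
move=> h1 h2; tfae.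
- by move=> <-; exact: diag_lifting h1.
- move=> [b [_ [r [hp [hc hs]]]]]; exists r; split => //; split => //.
  by move=> v lam l0 e; apply: submx_trans (hs _ _ l0 e) (eqB_sym b).
- by move=> [r [[hp _] [[<- <-] hs]]]; exact: sym_ptr hp hs.
Qed.
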